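(* Let $\delta\in(0,1]$, $p\in[0,1]$ and $n\in\mathbb{N}$ with $p\ge\frac{16\ln(2/\delta)}{n}$, and let $$\varepsilon=\log\left(1+\frac{\sqrt{64\log(4/\delta)}}{\sqrt{pn}}+\frac{8}{pn}\right).$$ Let $C\sim\mathrm{Bin}(n-1,p)$ and, conditionally on $C$, $A\sim\mathrm{Bin}(C,1/2)$. Let $P=(A+1,C-A)$ and $Q=(A,C-A+1)$. Then $$\Pr_{z\sim P}\left(-\varepsilon\le\ln\frac{\Pr(P=z)}{\Pr(Q=z)}\le\varepsilon\right)\ge1-\delta\quad\text{and}\quad\Pr_{z\sim Q}\left(-\varepsilon\le\ln\frac{\Pr(P=z)}{\Pr(Q=z)}\le\varepsilon\right)\ge1-\delta.$$ In particular, $P$ and $Q$ are $(\varepsilon,\delta)$-indistinguishable.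
   Context: Two random variables $P,Q$ on the same space are $(\varepsilon,\delta)$-indistinguishable if for every event $E$, $e^{-\varepsilon}(\Pr(Q\in E)-\delta)\le\Pr(P\in E)\le e^{\varepsilon}\Pr(Q\in E)+\delta$. $\mathrm{Bin}(m,p)$ is the binomial distribution. *)

(* Defs.v *)
From mathcomp Require Import all_boot all_order all_algebra.
From mathcomp Require Import all_classical all_reals all_analysis.
Set Implicit Arguments. Unset Strict Implicit. Unset Printing Implicit Defensive.
Import Order.TTheory GRing.Theory Num.Theory.
Local Open Scope ring_scope.

(* Joint law of (C, A): C ~ Bin(m, p), A | C ~ Bin(C, 1/2).
   joint m p c a = Pr(C = c, A = a). *)
Definition joint {R : realType} (m : nat) (p : R) (c a : nat) : R :=
  ('C(m, c))%:R * p ^+ c * (1 - p) ^+ (m - c) * ('C(c, a))%:R / 2 ^+ c.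

Definition PrP {R : realType} (m : nat) (p : R) (E : pred (nat * nat)) : R :=
  \sum_(0 <= c < m.+1) \sum_(0 <= a < c.+1)
     joint m p c a * (if E (a.+1, c - a)%N then 1 else 0).

Definition PrQ {R : realType} (m : nat) (p : R) (E : pred (nat * nat)) : R :=
  \sum_(0 <= c < m.+1) \sum_(0 <= a < c.+1)
     joint m p c a * (if E (a, (c - a).+1)%N then 1 else 0).

Definition pmfP {R : realType} (m : nat) (p : R) (z : nat * nat) : R :=
  PrP m p (pred1 z).
Definition pmfQ {R : realType} (m : nat) (p : R) (z : nat * nat) : R :=
  PrQ m p (pred1 z).

(* the event -eps <= ln(Pr(P=z)/Pr(Q=z)) <= eps; the log-ratio is only
   a finite real number when both masses are positive *)
Definition good_event {R : realType} (m : nat) (p eps : R) : pred (nat * nat) :=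
  fun z => [&& 0 < pmfP m p z, 0 < pmfQ m p z &
              - eps <= ln (pmfP m p z / pmfQ m p z) <= eps].

Definition indist {R : realType} (m : nat) (p eps delta : R) : Prop :=
  forall E : pred (nat * nat),
    expR (- eps) * (PrQ m p E - delta) <= PrP m p E /\
    PrP m p E <= expR eps * PrQ m p E + delta.

(* Main.v *)
Require Import Defs.
From mathcomp Require Import all_boot all_order all_algebra.
From mathcomp Require Import all_classical all_reals all_analysis.
From mathcomp Require Import lra zify ring.
Import Order.TTheory GRing.Theory Num.Theory.
Local Open Scope ring_scope.

Definition EP {R : realType} (m : nat) (p : R) (h : nat -> nat -> R) : R :=
  \sum_(0 <= c < m.+1) \sum_(0 <= a < c.+1) joint m p c a * h a (c - a)%N.

Definition Kc {R : realType} (m : nat) (p : R) (c : nat) : R :=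
  ('C(m, c))%:R * p ^+ c * (1 - p) ^+ (m - c) / 2 ^+ c.

Lemma jointE (R : realType) m (p : R) c a : joint m p c a = Kc m p c * ('C(c, a))%:R.
Proof. by rewrite /joint /Kc; rewrite -!mulrA; congr (_ * _); congr (_ * _); congr (_ * _); rewrite mulrC. Qed.

Lemma Kc_ge0 (R : realType) m (p : R) c : 0 <= p <= 1 -> 0 <= Kc m p c.
Proof.
move=> /andP[p0 p1]; rewrite /Kc.
apply: divr_ge0; last by rewrite exprn_ge0.
by rewrite !mulr_ge0 ?exprn_ge0 // subr_ge0.
Qed.

Lemma joint_ge0 (R : realType) m (p : R) c a : 0 <= p <= 1 -> 0 <= joint m p c a.
Proof. by move=> hp; rewrite jointE mulr_ge0 ?Kc_ge0. Qed.

Lemma EP_le (R : realType) m (p : R) h1 h2 : 0 <= p <= 1 ->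
  (forall a b, h1 a b <= h2 a b) -> EP m p h1 <= EP m p h2.
Proof.
move=> hp hh; rewrite /EP; apply: ler_sum => c _; apply: ler_sum => a _.
by apply: ler_wpM2l; [exact: joint_ge0|exact: hh].
Qed.

Lemma EPD (R : realType) m (p : R) h1 h2 :
  EP m p (fun a b => h1 a b + h2 a b) = EP m p h1 + EP m p h2.
Proof.
rewrite /EP -big_split /=; apply: eq_bigr => c _.
by rewrite -big_split; apply: eq_bigr => a _; rewrite mulrDr.
Qed.

Lemma EPZ (R : realType) m (p : R) k h :
  EP m p (fun a b => k * h a b) = k * EP m p h.
Proof.
rewrite /EP mulr_sumr; apply: eq_bigr => c _.
by rewrite mulr_sumr; apply: eq_bigr => a _; rewrite mulrCA.
Qed.

Lemma EPN (R : realType) m (p : R) h :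
  EP m p (fun a b => - h a b) = - EP m p h.
Proof.
rewrite -mulN1r -EPZ /EP; apply: eq_bigr => c _; apply: eq_bigr => a _.
by rewrite mulN1r.
Qed.

Lemma EP_mgf (R : realType) m (p x y : R) :
  EP m p (fun a b => x ^+ a * y ^+ b) = (1 - p + p * (x + y) / 2) ^+ m.
Proof.
rewrite /EP.
have inner c : \sum_(0 <= a < c.+1) joint m p c a * (x ^+ a * y ^+ (c - a)) =
   Kc m p c * (y + x) ^+ c.
  rewrite exprDn big_mkord mulr_sumr; apply: eq_bigr => i _.
  by rewrite jointE -mulr_natr; ring.
under eq_bigr => c _ do rewrite inner.
rewrite addrC exprDn big_mkord; apply: eq_bigr => i _.
rewrite /Kc !exprMn exprVn -[RHS]mulr_natr.
by ring.
Qed.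

Lemma sum_if_eq (R : realType) (n k : nat) (F : nat -> R) : (k < n)%N ->
  \sum_(0 <= i < n) (if i == k then F i else 0) = F k.
Proof.
elim: n => [//|n IH] hk.
rewrite big_nat_recr //=.
case: (ltnP k n) => hkn.
  by rewrite IH // (_ : (n == k) = false) ?addr0 //; apply/negbTE; rewrite neq_ltn hkn orbT.
have -> : k = n by lia.
rewrite eqxx big_nat_cond big1 ?add0r // => i /andP[/andP[_ hi] _].
by rewrite (_ : (i == n) = false) //; apply/negbTE; rewrite neq_ltn hi.
Qed.

Lemma collapse (R : realType) (m c0 k0 : nat) (F : nat -> nat -> R) :
  (k0 <= c0)%N -> (c0 <= m)%N ->
  \sum_(0 <= c < m.+1) \sum_(0 <= a < c.+1) F c a * (if (c == c0) && (a == k0) then 1 else 0)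
  = F c0 k0.
Proof.
move=> hk hc.
rewrite (eq_bigr (fun c => if c == c0 then F c k0 else 0)); last first.
  move=> c _; case: eqP => [->|_] /=.
    rewrite -(@sum_if_eq _ c0.+1 k0 (F c0)) //; apply: eq_bigr => a _.
    by case: (a == k0); rewrite ?mulr1 ?mulr0.
  by rewrite big1 // => a _; rewrite mulr0.
by rewrite (@sum_if_eq _ m.+1 c0 (fun c => F c k0)).
Qed.

Lemma pmfP_pt (R : realType) m (p : R) k c : (k < c)%N -> (c <= m)%N ->
  pmfP m p (k.+1, (c - k)%N) = joint m p c k.
Proof.
move=> hk hc; rewrite /pmfP /PrP -(@collapse _ m c k (joint m p)) //; last by lia.
apply: eq_bigr => c' _; apply: eq_big_nat => a /andP[_ ha].
have -> : pred1 (k.+1, (c - k)%N) (a.+1, (c' - a)%N) = (c' == c) && (a == k) => //.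
rewrite /pred1 /= xpair_eqE.
apply/andP/andP => -[/eqP h1 /eqP h2]; split; apply/eqP; lia.
Qed.

Lemma pmfQ_pt (R : realType) m (p : R) k c : (k < c)%N -> (c <= m)%N ->
  pmfQ m p (k.+1, (c - k)%N) = joint m p c k.+1.
Proof.
move=> hk hc; rewrite /pmfQ /PrQ -(@collapse _ m c k.+1 (joint m p)) //.
apply: eq_bigr => c' _; apply: eq_big_nat => a /andP[_ ha].
have -> : pred1 (k.+1, (c - k)%N) (a, (c' - a).+1) = (c' == c) && (a == k.+1) => //.
rewrite /pred1 /= xpair_eqE.
apply/andP/andP => -[/eqP h1 /eqP h2]; split; apply/eqP; lia.
Qed.

Lemma pmfP_0 (R : realType) m (p : R) j : pmfP m p (0%N, j) = 0.
Proof.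
rewrite /pmfP /PrP big1 // => c _; rewrite big1 // => a _.
by rewrite /pred1 /= ?xpair_eqE /= ?andbF mulr0.
Qed.

Lemma pmfQ_0 (R : realType) m (p : R) i : pmfQ m p (i, 0%N) = 0.
Proof.
rewrite /pmfQ /PrQ big1 // => c _; rewrite big1 // => a _.
by rewrite /pred1 /= ?xpair_eqE /= ?andbF mulr0.
Qed.

Lemma joint_ratio (R : realType) m (p : R) k c : (k < c)%N ->
  joint m p c k * (c - k)%:R = joint m p c k.+1 * (k.+1)%:R.
Proof.
move=> hk; rewrite !jointE -!mulrA -!natrM.
by rewrite [('C(c, k) * _)%N]mulnC -mul_bin_left mulnC.
Qed.

Lemma good_pt (R : realType) m (p r : R) k c : (k < c)%N -> (c <= m)%N ->
  0 < r -> 0 < Kc m p c ->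
  (k.+1)%:R <= r * (c - k)%:R -> (c - k)%:R <= r * (k.+1)%:R ->
  good_event m p (ln r) (k.+1, (c - k)%N).
Proof.
move=> hk hc r0 K0 h1 h2.
rewrite /good_event pmfP_pt // pmfQ_pt //.
have J0 : 0 < joint m p c k by rewrite jointE mulr_gt0 // ltr0n bin_gt0 ltnW.
have J1 : 0 < joint m p c k.+1 by rewrite jointE mulr_gt0 // ltr0n bin_gt0.
have ck0 : (0 : R) < (c - k)%:R by rewrite ltr0n; lia.
have k0 : (0 : R) < (k.+1)%:R by rewrite ltr0n.
have Q : joint m p c k / joint m p c k.+1 = (k.+1)%:R / (c - k)%:R.
  apply/eqP; rewrite eqr_div ?(gt_eqF J1) ?(gt_eqF ck0) //.
  by rewrite joint_ratio // mulrC.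
rewrite J0 J1 Q /=.
have pos : 0 < (k.+1)%:R / (c - k)%:R :> R by rewrite divr_gt0.
apply/andP; split.
  rewrite -lnV ?posrE // ler_ln ?posrE ?invr_gt0 //.
  rewrite ler_pdivlMr // -(ler_pM2l r0) mulrA mulfV ?gt_eqF // mul1r.
  by [].
by rewrite ler_ln ?posrE // ler_pdivrMr.
Qed.

Lemma good_bounds (R : realType) m (p r : R) k c : (k < c)%N -> (c <= m)%N ->
  0 < r -> good_event m p (ln r) (k.+1, (c - k)%N) ->
  joint m p c k <= r * joint m p c k.+1 /\ joint m p c k.+1 <= r * joint m p c k.
Proof.
move=> hk hc r0; rewrite /good_event pmfP_pt // pmfQ_pt //.
move=> /and3P[J0 J1 /andP[h1 h2]].
have D : 0 < joint m p c k / joint m p c k.+1 by rewrite divr_gt0.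
split.
  move: h2; rewrite ler_ln; [|by rewrite posrE|by rewrite posrE].
  by rewrite (ler_pdivrMr _ _ J1).
move: h1; rewrite -lnV; last by rewrite posrE.
rewrite ler_ln; [|by rewrite posrE invr_gt0|by rewrite posrE].
rewrite (ler_pdivlMr _ _ J1) -(ler_pM2l r0) mulrA mulfV; last by rewrite gt_eqF.
by rewrite mul1r.
Qed.

Lemma expR_le_inv1 (R : realType) (x : R) : x < 1 -> expR x <= (1 - x)^-1.
Proof.
move=> hx.
have h := expR_ge1Dx (- x).
rewrite expRN in h.
have p1 : 0 < 1 - x by rewrite subr_gt0.
rewrite -[expR x]invrK lef_pV2 ?posrE ?invr_gt0 ?expR_gt0 //.
Qed.

Lemma expRN_le (R : realType) (y : R) : 0 <= y -> expR (- y) <= ((1 + y / 2) ^+ 2)^-1.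
Proof.
move=> hy.
have e : expR y = expR (y / 2) ^+ 2.
  by rewrite -expRM_natl; congr expR; rewrite mulrC -mulrA mulVf ?mulr1 // pnatr_eq0.
have h1 : 0 <= 1 + y / 2 by rewrite addr_ge0 // divr_ge0.
have h2 : (1 + y / 2) ^+ 2 <= expR y.
  rewrite e; apply: lerXn2r; [by rewrite nnegrE | by rewrite nnegrE expR_ge0 | exact: expR_ge1Dx].
have h3 : 0 < (1 + y / 2) ^+ 2 by rewrite exprn_gt0 //; lra.
by rewrite expRN lef_pV2 ?posrE ?expR_gt0.
Qed.

Lemma pow_le_expR (R : realType) (m : nat) (v : R) : -1 <= v ->
  (1 + v) ^+ m <= expR (m%:R * v).
Proof.
move=> hv; rewrite expRM_natl; apply: lerXn2r; [|by rewrite nnegrE expR_ge0 | exact: expR_ge1Dx].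
rewrite nnegrE; lra.
Qed.

Lemma ln2_ge (R : realType) : 1 / 2 <= ln (2 : R).
Proof.
have h : expR (1 / 2 : R) <= 2.
  have h0 : (1 / 2 : R) < 1 by lra.
  have := @expR_le_inv1 R (1/2) h0.
  by rewrite (_ : 1 - 1 / 2 = 2^-1 :> R) ?invrK //; lra.
by rewrite -[X in X <= _](expRK (1 / 2 : R)) ler_ln ?posrE ?expR_gt0.
Qed.

Lemma ln2_le (R : realType) : ln (2 : R) <= 1.
Proof.
have h : (2 : R) <= expR 1 by have := expR_ge1Dx (1 : R).
by rewrite -[X in _ <= X](expRK (1 : R)) ler_ln ?posrE ?expR_gt0.
Qed.

Lemma q1 (R : realType) (s : R) : 0 <= s -> s <= 1/4 ->
  0 <= 25/16 - 49/16 * s - 37/8 * s^+2 - 31/16 * s^+3 - 7 * s^+4 + 4 * s^+5.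
Proof.
move=> h0 h1.
have h2 : s^+2 <= s/4 by nra.
have h3 : s^+3 <= s^+2/4 by rewrite exprS; nra.
have h4 : s^+4 <= s^+3/4 by rewrite (exprS _ 3); nra.
have h5 : 0 <= s^+5 by rewrite exprn_ge0.
lra.
Qed.

Lemma q2 (R : realType) (s : R) : 1/4 <= s -> s <= 9/25 ->
  0 <= -1/16 + 595/256 * s^+2 - 1535/512 * s^+3 - 33/32 * s^+4 - 91/32 * s^+5 - 7/2 * s^+6 + 2 * s^+7.
Proof.
move=> h0 h1.
set t := s - 1/4.
have ht : s = t + 1/4 by rewrite /t; lra.
have t0 : 0 <= t by rewrite /t; lra.
have t1 : t <= 11/100 by rewrite /t; lra.
rewrite ht.
have e2 : t^+2 <= 11/100 * t by nra.
have e3 : t^+3 <= 11/100 * t^+2 by rewrite exprS; nra.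
have e4 : t^+4 <= 11/100 * t^+3 by rewrite (exprS _ 3); nra.
have e5 : t^+5 <= 11/100 * t^+4 by rewrite (exprS _ 4); nra.
have e6 : t^+6 <= 11/100 * t^+5 by rewrite (exprS _ 5); nra.
have e7 : 0 <= t^+7 by rewrite exprn_ge0.
have f2 : 0 <= t^+2 by rewrite exprn_ge0.
have f3 : 0 <= t^+3 by rewrite exprn_ge0.
have f4 : 0 <= t^+4 by rewrite exprn_ge0.
have f5 : 0 <= t^+5 by rewrite exprn_ge0.
have f6 : 0 <= t^+6 by rewrite exprn_ge0.
rewrite !exprS !expr0 !mulr1.
rewrite !exprS !expr0 !mulr1 in e2 e3 e4 e5 e6 e7 f2 f3 f4 f5 f6.
nra.
Qed.

Lemma polyD (R : realType) (s u : R) : 0 < s -> s ^+ 2 <= 1 / 8 -> 0 <= u ->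
  s ^+ 2 - 1 / 16 <= u ->
  (1 - s / 2)^-1 + ((1 + (1 + 8 * s) * (s / 2) / 2) ^+ 2)^-1 - 2 <= u - 2 * s ^+ 2.
Proof.
move=> s0 s8 u0 su.
set A := 1 - s / 2.
set B := (1 + (1 + 8 * s) * (s / 2) / 2) ^+ 2.
have sle : s <= 9/25 by move: s8; rewrite expr2; nra.
have A0 : 0 < A by rewrite /A; lra.
have B0 : 0 < B by rewrite /B exprn_gt0 //; nra.
suff [T [hT hAB]] : exists T, T <= 2 - 2 * s ^+ 2 + u /\ A + B <= T * (A * B).
  have -> : A^-1 + B^-1 = (A + B) / (A * B) by field; apply/andP; split; rewrite gt_eqF.
  have : (A + B) / (A * B) <= T by rewrite ler_pdivrMr // mulr_gt0.
  lra.
case: (lerP s (1/4)) => hs.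
  exists (2 - 2 * s ^+ 2); split; first lra.
  have e : (2 - 2 * s ^+ 2) * (A * B) - (A + B) =
     s ^+ 2 * (25/16 - 49/16 * s - 37/8 * s^+2 - 31/16 * s^+3 - 7 * s^+4 + 4 * s^+5).
    by rewrite /A /B; field.
  have := q1 _ _ (ltW s0) hs.
  have : 0 <= s ^+ 2 by exact: sqr_ge0.
  move=> h1 h2.
  have := mulr_ge0 h1 h2; rewrite -e; lra.
exists (2 - s ^+ 2 - 1 / 16); split; first lra.
have e : (2 - s ^+ 2 - 1 / 16) * (A * B) - (A + B) =
  -1/16 + 595/256 * s^+2 - 1535/512 * s^+3 - 33/32 * s^+4 - 91/32 * s^+5 - 7/2 * s^+6 + 2 * s^+7.
  by rewrite /A /B; field.
have := q2 _ _ (ltW hs) sle; rewrite -e; lra.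
Qed.

Lemma fail_bound (R : realType) (delta p : R) (n : nat) :
  0 < delta <= 1 -> 0 <= p <= 1 -> (0 < n)%N ->
  16 * ln (2 / delta) / n%:R <= p ->
  let N := p * n%:R in let L := ln (4 / delta) in
  let s := Num.sqrt L / Num.sqrt N in
  let r := 1 + Num.sqrt (64 * L) / Num.sqrt N + 8 / N in
  let lam := s / 2 in
  [/\ 0 < p, 1 <= r, 0 < lam &
  (expR lam + expR (- (r * lam))) *
    (1 - p + p * (expR lam + expR (- (r * lam))) / 2) ^+ n.-1 <= delta].
Proof.
move=> /andP[d0 d1] /andP[p0 p1] n0 hp N L s r lam.
set ell := ln (2 / delta).
have l2a := ln2_ge R.
have l2b := ln2_le R.
have hell : ln 2 <= ell.
  have h2d : 2 <= 2 / delta by rewrite ler_pdivlMr //; lra.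
  rewrite /ell ler_ln // posrE; lra.
have n0' : (0 : R) < n%:R by rewrite ltr0n.
have hN16 : 16 * ell <= N by rewrite /N -ler_pdivrMr.
have pp : 0 < p.
  have h : 0 < 16 * ell / n%:R by rewrite divr_gt0 //; lra.
  exact: lt_le_trans h hp.
have N0 : 0 < N by rewrite /N mulr_gt0.
have hL : L = ell + ln 2.
  have h2 : 0 < 2 / delta by rewrite divr_gt0 //; lra.
  rewrite /L /ell addrC -lnM; [|by rewrite posrE; lra|by rewrite posrE].
  congr ln; field; lra.
have L0 : 0 < L by lra.
have sqL := sqrtr_gt0 L; rewrite L0 in sqL.
have sqN := sqrtr_gt0 N; rewrite N0 in sqN.
have s0 : 0 < s by rewrite /s divr_gt0.
have hsN : s ^+ 2 * N = L.
  rewrite /s exprMn exprVn !sqr_sqrtr ?ltW //; field; lra.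
have h64 : Num.sqrt (64 * L) = 8 * Num.sqrt L.
  rewrite sqrtrM; last lra.
  have e64 : (64 : R) = 8 ^+ 2 by rewrite expr2; lra.
  by rewrite e64 sqrtr_sqr ger0_norm //; lra.
have hr : r = 1 + 8 * s + 8 / N by rewrite /r h64 /s mulrA.
set u := N^-1.
have huN : u * N = 1 by rewrite /u mulVf //; lra.
have u0 : 0 < u by rewrite /u invr_gt0.
have s8 : s ^+ 2 <= 1 / 8 by nra.
have su : s ^+ 2 - 1 / 16 <= u by nra.
have us : u <= s ^+ 2 by nra.
have hD := polyD _ _ _ s0 s8 (ltW u0) su.
have hr1 : 1 + 8 * s <= r.
  have : 0 <= 8 / N by rewrite divr_ge0 //; lra.
  rewrite hr; lra.
have r1 : 1 <= r by lra.
have lam0 : 0 < lam by rewrite /lam; lra.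
split => //.
set x := expR lam. set y := expR (- (r * lam)).
have hx : x <= (1 - s / 2)^-1 by apply: expR_le_inv1; rewrite /lam in lam0 *; nra.
have hy : y <= ((1 + (1 + 8 * s) * (s / 2) / 2) ^+ 2)^-1.
  have hyy : 0 <= (1 + 8 * s) * (s / 2) by rewrite mulr_ge0 //; lra.
  apply: le_trans (expRN_le R _ hyy).
  by rewrite /y ler_expR lerN2 /lam ler_pM2r //; lra.
set w := (x + y) / 2 - 1.
have x0 : 0 < x by apply: expR_gt0.
have y0 : 0 < y by apply: expR_gt0.
have hw : w <= - s ^+ 2 / 2 by rewrite /w; lra.
have hw1 : -1 <= w by rewrite /w; lra.
have hM : (1 - p + p * (x + y) / 2) ^+ n.-1 <= expR ((n.-1)%:R * (p * w)).
  rewrite (_ : 1 - p + p * (x + y) / 2 = 1 + p * w); last by rewrite /w; field.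
  apply: pow_le_expR; nra.
have hxy : x + y <= 2 * expR w.
  have := expR_ge1Dx w; rewrite /w; lra.
have M0 : 0 <= (1 - p + p * (x + y) / 2) ^+ n.-1.
  by rewrite exprn_ge0 //; nra.
apply: le_trans (ler_pM _ _ hxy hM) _; [lra | exact: M0 |].
rewrite -mulrA -expRD.
have hn1 : (n.-1)%:R + 1 = n%:R :> R by rewrite natr1 prednK.
have hm0 : (0 : R) <= (n.-1)%:R by rewrite ler0n.
have step : w + (n.-1)%:R * (p * w) <= N * w.
  have -> : N * w = ((n.-1)%:R + 1) * p * w by rewrite hn1 /N; ring.
  nra.
have step2 : N * w <= 1 / 2 - L.
  have : N * w <= N * (- s ^+ 2 / 2) by rewrite ler_pM2l.
  have : N * (u - 2 * s ^+2) / 2 = 1 / 2 - L.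
    by rewrite -hsN -[X in X / 2 - _]huN; field.
  move=> e.
  have hwD : w <= (u - 2 * s ^+ 2) / 2 by rewrite /w; lra.
  have : N * w <= N * ((u - 2 * s ^+ 2) / 2) by rewrite ler_pM2l.
  rewrite mulrA e; lra.
have ed : 2 * expR (- ell) = delta.
  rewrite expRN /ell lnK; last by rewrite posrE divr_gt0 //; lra.
  by field; rewrite gt_eqF.
rewrite -ed ler_pM2l; last lra.
rewrite ler_expR; lra.
Qed.

Definition ind {R : realType} (b : bool) : R := if b then 1 else 0.

Lemma PrPE (R : realType) m (p : R) E :
  PrP m p E = EP m p (fun a b => ind (E (a.+1, b))).
Proof. by []. Qed.

Lemma PrQE (R : realType) m (p : R) E :
  PrQ m p E = EP m p (fun a b => ind (E (a, b.+1))).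
Proof. by []. Qed.

Lemma EP1 (R : realType) m (p : R) : EP m p (fun _ _ => 1) = 1.
Proof.
have h : (1 - p + p * (1 + 1) / 2 : R) = 1 by lra.
have e := EP_mgf R m p 1 1; rewrite h expr1n in e.
rewrite -[RHS]e /EP; apply: eq_bigr => c _; apply: eq_bigr => a _.
by rewrite !expr1n !mulr1.
Qed.

Lemma split_le (R : realType) m (p : R) (E G : pred (nat * nat)) : 0 <= p <= 1 ->
  PrP m p E <= PrP m p (fun z => E z && G z) + PrP m p (fun z => ~~ G z) /\
  PrQ m p E <= PrQ m p (fun z => E z && G z) + PrQ m p (fun z => ~~ G z).
Proof.
move=> hp; rewrite !PrPE !PrQE -!EPD.
split; apply: EP_le => // a b; rewrite /ind;
  by case: (E _); case: (G _) => /=; lra.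
Qed.

Lemma EPB (R : realType) m (p : R) h :
  EP m p (fun a b => 1 - h a b) = 1 - EP m p h.
Proof.
by rewrite (EPD _ _ _ (fun _ _ => 1) (fun a b => - h a b)) EPN EP1.
Qed.

Lemma ind_neg (R : realType) b : ind (~~ b) = 1 - ind b :> R.
Proof. by case: b; rewrite /ind /=; lra. Qed.

Lemma compl_eq (R : realType) m (p : R) (G : pred (nat * nat)) :
  PrP m p (fun z => ~~ G z) = 1 - PrP m p G /\
  PrQ m p (fun z => ~~ G z) = 1 - PrQ m p G.
Proof.
rewrite !PrPE !PrQE -!EPB.
by split; rewrite /EP; apply: eq_bigr => c _; apply: eq_bigr => a _; rewrite ind_neg.
Qed.

Lemma mono_le (R : realType) m (p : R) (E F : pred (nat * nat)) : 0 <= p <= 1 ->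
  (forall z, E z -> F z) -> PrP m p E <= PrP m p F /\ PrQ m p E <= PrQ m p F.
Proof.
move=> hp hEF; rewrite !PrPE !PrQE; split; apply: EP_le => // a b; rewrite /ind;
  by case hE: (E _); [rewrite hEF // | case: (F _)]; lra.
Qed.

Lemma shiftP (R : realType) m (p r : R) (S : pred (nat * nat)) : 0 <= p <= 1 -> 0 < r ->
  (forall z, S z -> good_event m p (ln r) z) ->
  PrP m p S <= r * PrQ m p S /\ PrQ m p S <= r * PrP m p S.
Proof.
move=> hp r0 hS.
have j0 c a : 0 <= joint m p c a by apply: joint_ge0.
have GP0 j : ~~ S (0%N, j).
  apply/negP => /hS; rewrite /good_event pmfP_0 ltxx //.
have GQ0 i : ~~ S (i, 0%N).
  apply/negP => /hS; rewrite /good_event pmfQ_0 ltxx andbF //.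
set TP := fun c => \sum_(0 <= a < c) joint m p c a * ind (S (a.+1, (c - a)%N)).
set TQ := fun c => \sum_(0 <= a < c) joint m p c a.+1 * ind (S (a.+1, (c - a)%N)).
have eP c : \sum_(0 <= a < c.+1) joint m p c a * ind (S (a.+1, (c - a)%N)) = TP c.
  rewrite big_nat_recr //= subnn (negbTE (GQ0 _)) /ind mulr0 addr0 //.
have eQ c : \sum_(0 <= a < c.+1) joint m p c a * ind (S (a, (c - a).+1)) = TQ c.
  rewrite big_nat_recl //= (negbTE (GP0 _)) /ind mulr0 add0r.
  apply: eq_big_nat => a /andP[_ ha].
  by rewrite (_ : (c - a.+1).+1 = c - a)%N //; lia.
have bnd c : (c <= m)%N -> TP c <= r * TQ c /\ TQ c <= r * TP c.
  move=> hc; rewrite /TP /TQ !mulr_sumr; split; apply: ler_sum_nat => a /andP[_ ha];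
  rewrite mulrA; case hSa: (S _); rewrite /ind ?mulr1 ?mulr0 //;
  have [h1 h2] := @good_bounds R m p r a c ha hc r0 (hS _ hSa) => //.
have eP' : EP m p (fun a b => ind (S (a.+1, b))) = \sum_(0 <= c < m.+1) TP c.
  by apply: eq_bigr => c _; exact: eP.
have eQ' : EP m p (fun a b => ind (S (a, b.+1))) = \sum_(0 <= c < m.+1) TQ c.
  by apply: eq_bigr => c _; exact: eQ.
rewrite !PrPE !PrQE eP' eQ'.
rewrite !mulr_sumr; split; apply: ler_sum_nat => c /andP[_ hc];
  by have [] := bnd c hc.
Qed.

Lemma f_ge1 (R : realType) (lam r A B : R) : 0 < lam ->
  ~~ ((A <= r * B) && (B <= r * A)) ->
  1 <= expR (A * lam - r * B * lam) + expR (B * lam - r * A * lam).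
Proof.
move=> l0 /nandP [h|h]; rewrite -ltNge in h.
- have h1 : 0 <= A * lam - r * B * lam.
    have : 0 <= (A - r * B) * lam by rewrite mulr_ge0 //; lra.
    lra.
  have := expR_ge1Dx (A * lam - r * B * lam).
  have := expR_ge0 (B * lam - r * A * lam).
  lra.
- have h1 : 0 <= B * lam - r * A * lam.
    have : 0 <= (B - r * A) * lam by rewrite mulr_ge0 //; lra.
    lra.
  have := expR_ge1Dx (B * lam - r * A * lam).
  have := expR_ge0 (A * lam - r * B * lam).
  lra.
Qed.

Lemma xy_exp (R : realType) (lam r : R) (i j : nat) :
  expR lam ^+ i * expR (- (r * lam)) ^+ j = expR (i%:R * lam - r * j%:R * lam).
Proof.
by rewrite -!expRM_natl -expRD; congr expR; ring.
Qed.

Lemma joint_pos (R : realType) m (p : R) c a : 0 <= p <= 1 ->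
  0 < joint m p c a -> 0 < Kc m p c.
Proof.
move=> hp; rewrite jointE lt0r => /andP[h _].
rewrite lt0r Kc_ge0 // andbT; apply: contraNneq h => ->; by rewrite mul0r.
Qed.

Lemma EPf (R : realType) m (p x y : R) :
  EP m p (fun a b => x ^+ a.+1 * y ^+ b + x ^+ b * y ^+ a.+1) =
  (x + y) * (1 - p + p * (x + y) / 2) ^+ m.
Proof.
transitivity (EP m p (fun a b => x * (x ^+ a * y ^+ b) + y * (y ^+ a * x ^+ b))).
  rewrite /EP; apply: eq_bigr => c _; apply: eq_bigr => a _.
  by rewrite !exprS; congr (_ * _); ring.
rewrite EPD EPZ EPZ !EP_mgf [y + x]addrC; ring.
Qed.

Lemma EPg (R : realType) m (p x y : R) :
  EP m p (fun a b => x ^+ b.+1 * y ^+ a + x ^+ a * y ^+ b.+1) =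
  (x + y) * (1 - p + p * (x + y) / 2) ^+ m.
Proof.
transitivity (EP m p (fun a b => x * (y ^+ a * x ^+ b) + y * (x ^+ a * y ^+ b))).
  rewrite /EP; apply: eq_bigr => c _; apply: eq_bigr => a _.
  by rewrite !exprS; congr (_ * _); ring.
rewrite EPD EPZ EPZ !EP_mgf [y + x]addrC; ring.
Qed.

Lemma goodP (R : realType) m (p r lam delta : R) : 0 <= p <= 1 -> 0 < r -> 0 < lam ->
  (expR lam + expR (- (r * lam))) *
    (1 - p + p * (expR lam + expR (- (r * lam))) / 2) ^+ m <= delta ->
  1 - delta <= PrP m p (good_event m p (ln r)).
Proof.
move=> hp r0 l0 hf.
set x := expR lam; set y := expR (- (r * lam)).
set f := fun a b : nat => x ^+ a.+1 * y ^+ b + x ^+ b * y ^+ a.+1.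
have f0 a b : 0 <= f a b.
  by rewrite /f addr_ge0 // mulr_ge0 // exprn_ge0 // expR_ge0.
have : EP m p (fun a b => 1 - f a b) <= PrP m p (good_event m p (ln r)).
  rewrite PrPE /EP; apply: ler_sum_nat => c /andP[_ hc]; apply: ler_sum_nat => a /andP[_ ha].
  have j0 := joint_ge0 _ m p c a hp.
  case: (boolP (0 < joint m p c a)) => J; last first.
    have -> : joint m p c a = 0 by apply/eqP; rewrite eq_le j0 andbT leNgt.
    by rewrite !mul0r.
  have K0 := joint_pos _ _ _ _ _ hp J.
  set A := (a.+1)%:R : R; set B := (c - a)%:R : R.
  case: (boolP ((A <= r * B) && (B <= r * A))) => cond.
    have hac : (a < c)%N.
      rewrite ltnNge; apply/negP => hca.
      move: cond; rewrite /B (_ : (c - a = 0)%N); last by lia.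
      rewrite mulr0 /A => /andP[h _]; move: h; rewrite leNgt ltr0Sn //.
    move/andP: cond => [h1 h2].
    have g := @good_pt R m p r a c hac hc r0 K0 h1 h2.
    rewrite /ind g mulr1 -[X in _ <= X]mulr1; apply: ler_wpM2l => //.
    by have := f0 a (c - a)%N; lra.
  have hf1 : 1 <= f a (c - a)%N by rewrite /f !xy_exp; apply: f_ge1.
  have hl : joint m p c a * (1 - f a (c - a)%N) <= 0 by rewrite mulr_ge0_le0 //; lra.
  apply: le_trans hl _; rewrite mulr_ge0 // /ind; case: (good_event _ _ _ _) => //.
rewrite EPB.
have := EPf R m p x y; rewrite -/f => ->.
move=> h; move: hf; rewrite -/x -/y => hf; lra.
Qed.

Lemma goodQ (R : realType) m (p r lam delta : R) : 0 <= p <= 1 -> 0 < r -> 0 < lam ->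
  (expR lam + expR (- (r * lam))) *
    (1 - p + p * (expR lam + expR (- (r * lam))) / 2) ^+ m <= delta ->
  1 - delta <= PrQ m p (good_event m p (ln r)).
Proof.
move=> hp r0 l0 hf.
set x := expR lam; set y := expR (- (r * lam)).
set g := fun a b : nat => x ^+ b.+1 * y ^+ a + x ^+ a * y ^+ b.+1.
have g0 a b : 0 <= g a b.
  by rewrite /g addr_ge0 // mulr_ge0 // exprn_ge0 // expR_ge0.
have : EP m p (fun a b => 1 - g a b) <= PrQ m p (good_event m p (ln r)).
  rewrite PrQE /EP; apply: ler_sum_nat => c /andP[_ hc]; apply: ler_sum_nat => a /andP[_ ha].
  have j0 := joint_ge0 _ m p c a hp.
  case: (boolP (0 < joint m p c a)) => J; last first.
    have -> : joint m p c a = 0 by apply/eqP; rewrite eq_le j0 andbT leNgt.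
    by rewrite !mul0r.
  have K0 := joint_pos _ _ _ _ _ hp J.
  set A := ((c - a).+1)%:R : R; set B := a%:R : R.
  case: (boolP ((A <= r * B) && (B <= r * A))) => cond.
    have a0 : (0 < a)%N.
      rewrite lt0n; apply/negP => /eqP a0; move: cond.
      by rewrite /B a0 mulr0 /A => /andP[h _]; move: h; rewrite leNgt ltr0Sn.
    have [k ek] : exists k, a = k.+1 by exists a.-1; lia.
    move: cond; rewrite /A /B ek.
    have hkc : (k < c)%N by lia.
    have e : (c - k.+1).+1 = (c - k)%N by lia.
    rewrite e => /andP[h1 h2].
    have gg := @good_pt R m p r k c hkc hc r0 K0 h2 h1.
    rewrite /ind gg mulr1 -[X in _ <= X]mulr1; apply: ler_wpM2l => //.
      by rewrite -ek.
    by have := g0 (k.+1) (c - k.+1)%N; lra.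
  have hg1 : 1 <= g a (c - a)%N by rewrite /g !xy_exp; apply: f_ge1.
  have hl : joint m p c a * (1 - g a (c - a)%N) <= 0 by rewrite mulr_ge0_le0 //; lra.
  apply: le_trans hl _; rewrite mulr_ge0 // /ind; case: (good_event _ _ _ _) => //.
rewrite EPB.
have := EPg R m p x y; rewrite -/g => ->.
move=> h; move: hf; rewrite -/x -/y => hf; lra.
Qed.

Lemma final (R : realType) m (p r lam delta : R) : 0 <= p <= 1 -> 0 < r -> 0 < lam ->
  (expR lam + expR (- (r * lam))) *
    (1 - p + p * (expR lam + expR (- (r * lam))) / 2) ^+ m <= delta ->
  1 - delta <= PrP m p (good_event m p (ln r)) /\
  1 - delta <= PrQ m p (good_event m p (ln r)) /\
  indist m p (ln r) delta.
Proof.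
move=> hp r0 l0 hf.
have gP := goodP _ _ _ _ _ _ hp r0 l0 hf.
have gQ := goodQ _ _ _ _ _ _ hp r0 l0 hf.
split => //; split => //.
move=> E.
set G := good_event m p (ln r).
have [hPs hQs] := split_le _ m p E G hp.
have [cP cQ] := compl_eq _ m p G.
have [sPQ sQP] := @shiftP R m p r (fun z => E z && G z) hp r0 (fun z => fun h => proj2 (andP h)).
have [mP mQ] := @mono_le R m p (fun z => E z && G z) E hp (fun z => fun h => proj1 (andP h)).
rewrite lnK ?posrE // expRN lnK ?posrE //.
split.
  have h1 : PrQ m p E - delta <= r * PrP m p E.
    have : r * PrP m p (fun z => E z && G z) <= r * PrP m p E by rewrite ler_pM2l.
    lra.
  have ri : 0 < r^-1 by rewrite invr_gt0.
  have := ler_wpM2l (ltW ri) h1.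
  by rewrite mulrA mulVf ?gt_eqF // mul1r.
have : r * PrQ m p (fun z => E z && G z) <= r * PrQ m p E by rewrite ler_pM2l.
lra.
Qed.

Theorem lemmaA1 (R : realType) (delta p : R) (n : nat) :
  0 < delta <= 1 -> 0 <= p <= 1 -> (0 < n)%N ->
  16 * ln (2 / delta) / n%:R <= p ->
  let eps := ln (1 + Num.sqrt (64 * ln (4 / delta)) / Num.sqrt (p * n%:R)
                   + 8 / (p * n%:R)) in
  1 - delta <= PrP n.-1 p (good_event n.-1 p eps) /\
  1 - delta <= PrQ n.-1 p (good_event n.-1 p eps) /\
  indist n.-1 p eps delta.
Proof.
move=> hd hp hn hb eps.
have [pp r1 l0 hf] := @fail_bound R delta p n hd hp hn hb.
have r0 : 0 < 1 + Num.sqrt (64 * ln (4 / delta)) / Num.sqrt (p * n%:R) + 8 / (p * n%:R).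
  by apply: lt_le_trans r1; lra.
exact: (final _ _ _ _ _ _ hp r0 l0 hf).
Qed.
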